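(* For any integers $n\ge4$ and $k<\frac{n-1}{2}$, the Cayley graph of $\mathbb{Z}_n$ with generators $\{\pm1,\dots,\pm k\}$ (i.e. the graph on $\{0,\dots,n-1\}$ where $i,j$ are adjacent iff $j-i\equiv\pm g\pmod n$ for some $g\in\{1,\dots,k\}$) has broadcast rate $\beta=n/(k+1)$.
   Context: For an undirected graph $G$ on vertex set $V$, consider the index coding problem: a server holds messages $x_v\in\Sigma$ ($|\Sigma|>1$), receiver $v$ wants $x_v$ and knows $x_u$ for every neighbor $u$ of $v$. A solution is an encoding $\mathcal{E}:\Sigma^{V}\to\Sigma_P$ from which each receiver can recover its message given its side information, for all message values. $\beta_t(G)$ is the minimum of $\lceil\log_2|\Sigma_P|\rceil$ over solutions with $|\Sigma|=2^t$, and the broadcast rate is $\beta(G)=\lim_t\beta_t(G)/t=\inf_t\beta_t(G)/t$. *)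

(* Defs.v *)
From mathcomp Require Import all_boot all_order all_algebra.
From mathcomp Require Import boolp classical_sets reals.
Set Implicit Arguments. Unset Strict Implicit. Unset Printing Implicit Defensive.
Import Order.TTheory GRing.Theory Num.Theory.

Definition alph (t : nat) := 'I_(2 ^ t).

(* An index coding solution for the undirected graph with adjacency relation
   e on V: an encoding E : Sigma^V -> P such that every receiver v can recover
   x_v from E x and its side information (x_u for neighbours u of v), i.e.
   there is a decoder D v depending on x only through (x_u)_{u ~ v}. *)
Definition is_ic_solution (V : finType) (e : rel V) (t : nat) (P : finType)
    (E : (V -> alph t) -> P) : Prop :=
  exists D : V -> P -> (V -> alph t) -> alph t,
    (forall v p (x y : V -> alph t),
        (forall u, e v u -> x u = y u) -> D v p x = D v p y) /\
    (forall (x : V -> alph t) v, D v (E x) x = x v).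

(* ell is achievable: some solution with ceil(log2 |Sigma_P|) = ell
   (up_log 2 m = ceil(log2 m) for m >= 1). *)
Definition ic_achievable (V : finType) (e : rel V) (t ell : nat) : Prop :=
  exists (P : finType) (E : (V -> alph t) -> P),
    is_ic_solution e E /\ up_log 2 #|P| = ell.

Lemma ic_achievable_ex (V : finType) (e : rel V) (t : nat) :
  exists ell, `[< ic_achievable e t ell >].
Proof.
exists (up_log 2 #|{ffun V -> alph t}|); apply/asboolP.
exists {ffun V -> alph t}, (fun x => finfun x); split => //.
exists (fun v (p : {ffun V -> alph t}) _ => p v); split => // x v.
by rewrite ffunE.
Qed.

Definition beta_t (V : finType) (e : rel V) (t : nat) : nat :=
  ex_minn (ic_achievable_ex e t).

Definition broadcast_rate (R : realType) (V : finType) (e : rel V) : R :=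
  inf [set ((beta_t e t)%:R / t%:R)%R | t in [set t : nat | (0 < t)%N]].

Definition circ_adj (n k : nat) : rel 'I_n :=
  fun i j => [exists g : 'I_k.+1, (0 < g)%N &&
     ((j + g == i %[mod n]) || (i + g == j %[mod n]))].
Arguments circ_adj : clear implicits.

(* Main.v *)
Require Import Defs.
From mathcomp Require Import all_boot all_order all_algebra.
From mathcomp Require Import boolp classical_sets reals exp.
Import Order.TTheory GRing.Theory Num.Theory.
From mathcomp Require Import ring lra zify.
Import fintype finset.
Set Warnings "-notation-overridden,-ambiguous-paths".
Local Open Scope ring_scope.
Section Ent.
Variables (R : realType) (V A : finType) (X : {set {ffun V -> A}}).

Implicit Types (S T : {set V}) (x y z : {ffun V -> A}).
Definition agr (S : {set V}) (x y : {ffun V -> A}) := [forall v in S, x v == y v].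
Definition cls S x := [set y in X | agr S y x].
Definition cc S x : R := (#|cls S x|)%:R.

Lemma agrC S x y : agr S x y = agr S y x.
Proof.
by apply/forall_inP/forall_inP => H v Hv; rewrite eq_sym H.
Qed.

Lemma agr_trans S x y z : agr S x y -> agr S y z -> agr S x z.
Proof.
move=> /forall_inP H1 /forall_inP H2; apply/forall_inP => v Hv.
by rewrite (eqP (H1 v Hv)) H2.
Qed.

Lemma agr_sub S T x y : S \subset T -> agr T x y -> agr S x y.
Proof.
move=> /subsetP sST /forall_inP H; apply/forall_inP => v Hv; exact: H (sST v Hv).
Qed.

Arguments agr_sub {S T x y}.
Arguments agr_trans {S x y z}.
Lemma agrU S T x y : agr (S :|: T) x y = agr S x y && agr T x y.
Proof.
apply/idP/andP => [H|[H1 H2]].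
  by split; [apply: (agr_sub (finset.subsetUl S T) H)|apply: (agr_sub (finset.subsetUr S T) H)].
apply/forall_inP => v; rewrite inE => /orP[Hv|Hv].
  exact: (forall_inP H1).
exact: (forall_inP H2).
Qed.

Lemma agr_refl S x : agr S x x.
Proof. by apply/forall_inP. Qed.

Lemma cls_eq S x y : agr S x y -> cls S x = cls S y.
Proof.
move=> H; apply/setP => z; rewrite !inE.
case: (z \in X) => //=; apply/idP/idP => H'.
  exact: agr_trans H' H.
by apply: (agr_trans H'); rewrite agrC.
Qed.

Arguments cls_eq {S x y}.
Lemma cc_gt0 S x : x \in X -> 0 < cc S x.
Proof.
move=> Hx; rewrite /cc ltr0n card_gt0; apply/set0Pn; exists x.
by rewrite inE Hx agr_refl.
Qed.

Lemma ccE S x : cc S x = \sum_(y in X) ((agr S y x)%:R : R).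
Proof.
rewrite /cc -sum1_card natr_sum.
rewrite big_mkcond [RHS]big_mkcond /=; apply: eq_bigr => i _.
by rewrite !inE; case: (i \in X); case: (agr S i x).
Qed.


Lemma agrI_l S T x y : agr S x y -> agr (S :&: T) x y.
Proof. exact: agr_sub (finset.subsetIl S T). Qed.
Lemma agrI_r S T x y : agr T x y -> agr (S :&: T) x y.
Proof. exact: agr_sub (finset.subsetIr S T). Qed.

Lemma sum_cls S x0 : x0 \in X -> \sum_(x in X) (agr S x x0)%:R / cc S x = 1.
Proof.
move=> Hx0.
rewrite (eq_bigr (fun x => (agr S x x0)%:R / cc S x0)); last first.
  move=> x Hx; case Ha: (agr S x x0); last by rewrite !mul0r.
  by rewrite /cc (cls_eq Ha).
by rewrite -mulr_suml -ccE divff // gt_eqF // cc_gt0.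
Qed.

Lemma inner S T y z : y \in X -> z \in X ->
  \sum_(x in X) (agr S y x && agr T z x)%:R / (cc (S :|: T) x * cc (S :&: T) x)
   <= (agr (S :&: T) z y)%:R / cc (S :&: T) y.
Proof.
move=> Hy Hz.
case: (pickP [pred x0 | (x0 \in X) && agr S y x0 && agr T z x0]) => [x0 /andP[/andP[Hx0 H1] H2]|H0].
  have Hzy : agr (S :&: T) z y.
    apply: (agr_trans (y := x0)); first exact: agrI_r.
    by apply: agrI_l; rewrite agrC.
  rewrite Hzy (eq_bigr (fun x => (agr (S :|: T) x x0)%:R / cc (S :|: T) x / cc (S :&: T) y)).
    by rewrite -mulr_suml sum_cls // mul1r.
  move=> x Hx.
  case Hp: (agr S y x && agr T z x).
    move/andP: Hp => [Hp1 Hp2].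
    have -> : agr (S :|: T) x x0.
      rewrite agrU; apply/andP; split.
        by apply: (agr_trans (y := y)); [rewrite agrC|].
      by apply: (agr_trans (y := z)); [rewrite agrC|].
    have -> : cc (S :&: T) x = cc (S :&: T) y.
      by rewrite /cc (cls_eq (agrI_l _ _ _ _ (_ : agr S x y))) // agrC.
    by rewrite invfM mulrA.
  case Hq: (agr (S :|: T) x x0); last by rewrite !mul0r.
  move: Hq; rewrite agrU => /andP[Hq1 Hq2].
  move: Hp; rewrite (agr_trans H1 _) ?(agr_trans H2 _) //; by rewrite agrC.
rewrite big1; last first.
  move=> x Hx; move: (H0 x); rewrite /= Hx /= => ->; by rewrite mul0r.
by rewrite divr_ge0 // ?ler0n // ltW // cc_gt0.
Qed.


Lemma ccM S T x : cc S x * cc T x =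
  \sum_(y in X) \sum_(z in X) ((agr S y x && agr T z x)%:R : R).
Proof.
rewrite (ccE S) (ccE T) big_distrl /=; apply: eq_bigr => y _.
rewrite big_distrr /=; apply: eq_bigr => z _.
by rewrite -natrM mulnb.
Qed.

Lemma ratio_sum S T :
  \sum_(x in X) cc S x * cc T x / (cc (S :|: T) x * cc (S :&: T) x) <= (#|X|)%:R.
Proof.
under eq_bigr => x _ do rewrite ccM mulr_suml.
under eq_bigr => x _ do under eq_bigr => y _ do rewrite mulr_suml.
rewrite exchange_big /=.
under eq_bigr => y _ do rewrite exchange_big /=.
apply: (le_trans (y := \sum_(y in X) \sum_(z in X) (agr (S :&: T) z y)%:R / cc (S :&: T) y)).
  apply: ler_sum => y Hy; apply: ler_sum => z Hz.
  exact: inner.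
rewrite (eq_bigr (fun _ => 1)) ?sumr_const //.
move=> y Hy; by rewrite -mulr_suml -ccE divff // gt_eqF // cc_gt0.
Qed.


Definition NN : R := (#|X|)%:R.
Definition Gf S := NN * ln NN - \sum_(x in X) ln (cc S x).

Lemma ln_le_sub1 (y : R) : 0 < y -> ln y <= y - 1.
Proof.
move=> y0; have := @le_ln1Dx R (y - 1); rewrite addrCA subrr addr0; apply.
lra.
Qed.

Lemma pos_in {y : R} : 0 < y -> y \in Num.pos.
Proof. by rewrite posrE. Qed.

Lemma Gf_submod S T : Gf (S :|: T) + Gf (S :&: T) <= Gf S + Gf T.
Proof.
rewrite /Gf.
suff H : \sum_(x in X) (ln (cc S x) + ln (cc T x) - ln (cc (S :|: T) x) - ln (cc (S :&: T) x)) <= 0.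
  move: H; rewrite !big_split /= !sumrN; lra.
apply: (le_trans (y := \sum_(x in X) (cc S x * cc T x / (cc (S :|: T) x * cc (S :&: T) x) - 1))).
  apply: ler_sum => x Hx.
  have p1 := cc_gt0 S x Hx; have p2 := cc_gt0 T x Hx;
  have p3 := cc_gt0 (S :|: T) x Hx; have p4 := cc_gt0 (S :&: T) x Hx.
  have -> : ln (cc S x) + ln (cc T x) - ln (cc (S :|: T) x) - ln (cc (S :&: T) x)
     = ln (cc S x * cc T x / (cc (S :|: T) x * cc (S :&: T) x)).
    rewrite ln_div ?pos_in ?mulr_gt0 // !lnM ?pos_in //.
    by rewrite opprD addrA.
  by apply: ln_le_sub1; rewrite divr_gt0 // mulr_gt0.
rewrite big_split /= sumrN sumr_const subr_le0.
exact: ratio_sum.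
Qed.


Lemma Gf0 : Gf finset.set0 = 0.
Proof.
rewrite /Gf (eq_bigr (fun _ => ln NN)); last first.
  move=> x Hx; congr ln; rewrite /cc /NN; congr (_%:R); apply: eq_card => y.
  by rewrite !inE andb_idr // => _; apply/forall_inP => v; rewrite inE.
by rewrite sumr_const -mulr_natl subrr.
Qed.

Lemma GfT : Gf [set: V] = NN * ln NN.
Proof.
rewrite /Gf big1 ?subr0 // => x Hx.
suff -> : cc [set: V] x = 1 by rewrite ln1.
rewrite /cc (_ : cls [set: V] x = [set x]) ?cards1 //.
apply/setP => y; rewrite !inE; apply/andP/eqP => [[_ /forall_inP H]|->].
  by apply/ffunP => v; apply/eqP/H; rewrite inE.
by split => //; apply: agr_refl.
Qed.

Lemma Gf_ge0 S : 0 <= Gf S.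
Proof.
rewrite /Gf subr_ge0.
apply: (le_trans (y := \sum_(x in X) ln NN)); last by rewrite sumr_const -mulr_natl.
apply: ler_sum => x Hx.
rewrite ler_ln ?pos_in ?cc_gt0 //; last by rewrite /NN ltr0n card_gt0; apply/set0Pn; exists x.
rewrite /cc /NN ler_nat; apply: subset_leq_card; apply/subsetP => y; rewrite inE => /andP[].
by [].
Qed.

Lemma Gf_subadd S T : Gf (S :|: T) <= Gf S + Gf T.
Proof. have := Gf_submod S T; have := Gf_ge0 (S :&: T); lra. Qed.

Lemma Gf_det S T : (forall x y, x \in X -> y \in X -> agr S x y -> agr T x y) ->
  Gf (S :|: T) = Gf S.
Proof.
move=> H; rewrite /Gf; congr (_ - _); apply: eq_bigr => x Hx; congr (ln (_%:R)).
apply: eq_card => y; rewrite !inE agrU; case Hy: (y \in X) => //=.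
by apply/andP/idP => [[]//|H1]; split => //; apply: H.
Qed.


Lemma agr1 v x y : agr [set v] x y = (x v == y v).
Proof.
apply/forall_inP/eqP => [H|H u]; first by apply/eqP/H; rewrite inE.
by rewrite inE => /eqP ->; apply/eqP.
Qed.

Lemma sum_inv1 v : \sum_(x in X) (cc [set v] x)^-1 <= (#|A|)%:R.
Proof.
have E : forall x, x \in X -> (cc [set v] x)^-1 =
    \sum_(a : A) (x v == a)%:R / cc [set v] x.
  move=> x Hx; rewrite -mulr_suml (bigD1 (x v)) //= eqxx big1 ?addr0 ?mul1r //.
  by move=> a /negbTE; rewrite eq_sym => ->.
rewrite (eq_bigr _ E) exchange_big /=.
rewrite -sum1_card natr_sum; apply: ler_sum => a _.
case: (pickP [pred x0 | (x0 \in X) && (x0 v == a)]) => [x0 /andP[Hx0 /eqP Ha]|H0].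
  rewrite (eq_bigr (fun x => (agr [set v] x x0)%:R / cc [set v] x)); last first.
    by move=> x Hx; rewrite agr1 Ha.
  by rewrite sum_cls.
rewrite big1 // => x Hx; move: (H0 x); rewrite /= Hx /= => ->; by rewrite mul0r.
Qed.

Lemma Gf1 v : Gf [set v] <= NN * ln (#|A|)%:R.
Proof.
case: (eqVneq #|X| 0%N) => [X0|Xn0].
  by rewrite /Gf /NN X0 mul0r big1 ?subr0 ?mul0r // => x; rewrite (card0_eq X0).
have NN0 : 0 < NN by rewrite /NN ltr0n lt0n.
have Ax : exists x, x \in X.
  have : (0 < #|X|)%N by rewrite lt0n.
  by rewrite card_gt0 => /set0Pn.
have q0 : 0 < (#|A|)%:R :> R.
  case: Ax => x _; rewrite ltr0n; apply/card_gt0P; by exists (x v).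
set q := (#|A|)%:R : R.
have H1 : forall x, x \in X ->
   ln NN - ln (cc [set v] x) - ln q <= NN / q * (cc [set v] x)^-1 - 1.
  move=> x Hx; have c0 := cc_gt0 [set v] x Hx.
  have -> : ln NN - ln (cc [set v] x) - ln q = ln (NN / q * (cc [set v] x)^-1).
    have d0 : 0 < NN / q by apply: divr_gt0.
    have i0 : 0 < (cc [set v] x)^-1 by rewrite invr_gt0.
    rewrite (lnM (pos_in d0) (pos_in i0)) (ln_div (pos_in NN0) (pos_in q0)).
    rewrite (lnV (pos_in c0)).
    by rewrite addrAC.
  apply: ln_le_sub1.
  by apply: mulr_gt0; [apply: divr_gt0|rewrite invr_gt0].
have H2 : \sum_(x in X) (NN / q * (cc [set v] x)^-1 - 1) <= 0.
  rewrite big_split /= -mulr_sumr sumrN sumr_const subr_le0.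
  apply: (le_trans (ler_wpM2l _ (sum_inv1 v))).
    by rewrite divr_ge0 // ltW.
  by rewrite -/q mulfVK // gt_eqF.
have H3 : \sum_(x in X) (ln NN - ln (cc [set v] x) - ln q) <= 0.
  apply: le_trans H2; apply: ler_sum => x Hx; exact: H1.
move: H3; rewrite big_split /= big_split /= !sumrN !sumr_const /Gf.
rewrite -[ln NN *+ _]mulr_natl -[ln q *+ _]mulr_natl -/NN => H3.
lra.
Qed.


End Ent.
Global Opaque Gf.
Section Cyc.
Local Open Scope nat_scope.
Context {n : nat} (Hn : 0 < n).

Definition addo (r : 'I_n) (a : nat) : 'I_n := Ordinal (ltn_pmod (r + a) Hn).
Definition off (r i : 'I_n) : nat := (i + (n - r)) %% n.
Definition itv (r : 'I_n) L : {set 'I_n} := [set i | off r i < L].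
Implicit Types (r i : 'I_n).

Lemma off_lt r i : off r i < n.
Proof. exact: ltn_pmod. Qed.

Lemma off_spec r i : (r + off r i) %% n = i.
Proof.
rewrite /off modnDmr.
have -> : r + (i + (n - r)) = i + n by have := ltn_ord r; lia.
by rewrite modnDr modn_small.
Qed.

Lemma off_uniq r i m : m < n -> (r + m) %% n = i -> off r i = m.
Proof.
move=> Hm H.
have H2 := off_spec r i.
rewrite -H in H2.
move/eqP: H2; rewrite eqn_modDl modn_small ?off_lt // modn_small //.
by move/eqP.
Qed.

Lemma off_addo r a : off r (addo r a) = a %% n.
Proof. by apply: off_uniq; rewrite ?ltn_pmod //= modnDmr. Qed.

Lemma addo_off r a i : off r i = (off (addo r a) i + a) %% n.
Proof.
apply: off_uniq; first exact: ltn_pmod.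
rewrite modnDmr -(off_spec (addo r a) i) /= modnDml.
congr (_ %% n); lia.
Qed.

Lemma eq_addo r a i : a < n -> (i == addo r a) = (off r i == a).
Proof.
move=> Ha; apply/eqP/eqP => [->|H]; first by rewrite off_addo modn_small.
by apply: val_inj; rewrite /= -H off_spec.
Qed.

Lemma off1 r i : off r i = (if (off (addo r 1) i).+1 == n then 0 else (off (addo r 1) i).+1).
Proof.
rewrite (addo_off r 1 i) addn1.
case: eqP => [->|H]; first by rewrite modnn.
by rewrite modn_small //; have := off_lt (addo r 1) i; lia.
Qed.

Lemma itv_S r L : L < n -> itv r L.+1 = itv r L :|: [set addo r L].
Proof.
move=> HL; apply/setP => i; rewrite !inE eq_addo //; lia.
Qed.

Lemma itv_U1 r L : 1 <= L -> L.+1 <= n -> itv r L.+1 = itv r L :|: itv (addo r 1) L.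
Proof.
move=> H1 H2; apply/setP => i; rewrite !inE off1.
have := off_lt (addo r 1) i.
case: eqP => H; lia.
Qed.

Lemma itv_I1 r L : 1 <= L -> L.+1 <= n -> itv r L :&: itv (addo r 1) L = itv (addo r 1) L.-1.
Proof.
move=> H1 H2; apply/setP => i; rewrite !inE off1.
have := off_lt (addo r 1) i.
case: eqP => H; lia.
Qed.

Lemma itvT r : itv r n = [set: 'I_n].
Proof. by apply/setP => i; rewrite !inE off_lt. Qed.

Lemma itv0 r : itv r 0 = finset.set0.
Proof. by apply/setP => i; rewrite !inE. Qed.


Lemma nbrP k v u : circ_adj n k v u ->
  exists g, [/\ 0 < g, g <= k & ((u + g) %% n = v \/ (v + g) %% n = u)].
Proof.
case/existsP => g /andP[g0 /orP[/eqP H|/eqP H]]; exists g; split => //;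
  try (by have := ltn_ord g; lia).
  by left; rewrite H modn_small.
by right; rewrite H modn_small.
Qed.

Lemma modn_big x : n <= x < n.*2 -> x %% n = x - n.
Proof.
move=> H; have -> : x = (x - n) + n by lia.
rewrite modnDr modn_small; lia.
Qed.

Lemma hole_nbr k b r u : k < n -> k <= b -> circ_adj n k (addo r k) u ->
  u \in itv r k :|: itv (addo r k.+1) b.
Proof.
move=> Hk Hb /nbrP [g [g0 gk [H|H]]]; rewrite !inE.
  have -> : off r u = k - g; last by rewrite ltn_subrL g0 /=; lia.
  apply: off_uniq; first lia.
  apply/eqP; rewrite -(modn_small (ltn_ord u)) -(eqn_modDr g) H /=.
  by rewrite -addnA subnK.
have -> : off (addo r k.+1) u = g.-1; last by apply/orP; right; lia.
apply: off_uniq; first lia.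
by rewrite -H /= !modnDml; congr (_ %% n); lia.
Qed.

Lemma itv_hole k b r : b + k.+1 <= n ->
  itv r (b + k.+1) = (itv r k :|: itv (addo r k.+1) b) :|: [set addo r k].
Proof.
move=> H; apply/setP => i; rewrite !inE eq_addo; last lia.
rewrite (addo_off r k.+1 i).
have := off_lt (addo r k.+1) i.
set m := off (addo r k.+1) i => Hm.
case: (ltnP (m + k.+1) n) => H2.
  rewrite modn_small //; lia.
rewrite modn_big; lia.
Qed.

Lemma top_nbr k r u : k < n -> circ_adj n k (addo r n.-1) u -> u \in itv r n.-1.
Proof.
move=> Hk Hu; rewrite inE.
have Hne : u != addo r n.-1.
  apply/eqP => Heq; move/nbrP: Hu => [g [g0 gk Hg]]; rewrite Heq in Hg.
  have : (addo r n.-1 + g) %% n = (addo r n.-1 + 0) %% n.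
    by rewrite addn0 (modn_small (ltn_ord _)); case: Hg.
  move/eqP; rewrite eqn_modDl mod0n modn_small; lia.
move: Hne; rewrite eq_addo; last lia.
have := off_lt r u; lia.
Qed.

End Cyc.
Section Arith.
Variable R : realType.

Lemma seqA (E : nat -> R) n :
  (forall L, (1 <= L)%N -> (L.+1 <= n)%N -> E L.+1 + E L.-1 <= 2 * E L) ->
  forall i d, (1 <= i)%N -> (i + d <= n)%N ->
    E (i + d)%N - E (i + d)%N.-1 <= E i - E i.-1.
Proof.
move=> Hc i d Hi; elim: d => [|d IH] Hd; first by rewrite addn0; lra.
have H1 : E (i + d)%N.+1 + E (i + d)%N.-1 <= 2 * E (i + d)%N by apply: Hc; lia.
have H2 : E (i + d)%N - E (i + d)%N.-1 <= E i - E i.-1 by apply: IH; lia.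
apply: le_trans H2.
rewrite addnS /=; move: H1; lra.
Qed.

Lemma seqB (E : nat -> R) n :
  (forall L, (1 <= L)%N -> (L.+1 <= n)%N -> E L.+1 + E L.-1 <= 2 * E L) ->
  forall L j, (L <= n)%N -> (j < L)%N ->
    j%:R * (E L - E L.-1) <= E L - E (L - j)%N.
Proof.
move=> Hc L j HL; elim: j => [|j IH] Hj; first by rewrite mul0r subn0 subrr.
have IH' : j%:R * (E L - E L.-1) <= E L - E (L - j)%N by apply: IH; lia.
have HA : E (L - j + j)%N - E (L - j + j)%N.-1 <= E (L - j)%N - E (L - j)%N.-1.
  apply: (seqA E n Hc (L - j)%N j); lia.
have E1 : (L - j + j)%N = L by lia.
have E2 : (L - j).-1 = (L - j.+1)%N by lia.
rewrite E1 E2 in HA.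
rewrite -addn1 natrD mulrDl mul1r addn1.
lra.
Qed.

Lemma seq_final (E : nat -> R) n k c :
  (k.*2.+2 <= n)%N ->
  (forall L, (1 <= L)%N -> (L.+1 <= n)%N -> E L.+1 + E L.-1 <= 2 * E L) ->
  (forall b, (k <= b)%N -> (b + k.+1 <= n)%N -> E (b + k.+1)%N <= E k + E b) ->
  E k <= c -> E n = E n.-1 ->
  k.+1%:R * E n <= n%:R * c.
Proof.
move=> Hn Hc Hh Hk Htop.
have HC : forall j, (k + j * k.+1 <= n)%N -> E (k + j * k.+1)%N <= j.+1%:R * c.
  elim => [|j IH] Hj; first by rewrite mul0n addn0 mul1r.
  have H1 := IH ltac:(lia).
  have H2 : E (k + j * k.+1 + k.+1)%N <= E k + E (k + j * k.+1)%N by apply: Hh; lia.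
  have -> : (k + j.+1 * k.+1 = k + j * k.+1 + k.+1)%N by rewrite mulSn; lia.
  rewrite -[j.+2%:R]natr1 mulrDl mul1r; lra.
have HD : forall a s, (k.*2.+1 <= a)%N -> (a + s <= n)%N ->
    k.+1%:R * E (a + s)%N <= k.+1%:R * E a + s%:R * c.
  move=> a; elim => [|s IH] Ha Has; first by rewrite addn0 mul0r addr0.
  have H1 := IH Ha ltac:(lia).
  set L := (a + s.+1)%N.
  have HB : k.+1%:R * (E L - E L.-1) <= E L - E (L - k.+1)%N.
    apply: (seqB E n Hc); rewrite /L; lia.
  have HH : E (L - k.+1 + k.+1)%N <= E k + E (L - k.+1)%N by apply: Hh; rewrite /L; lia.
  have E1 : (L - k.+1 + k.+1)%N = L by rewrite /L; lia.
  have E2 : L.-1 = (a + s)%N by rewrite /L; lia.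
  rewrite E1 in HH; rewrite E2 in HB.
  rewrite -[s.+1%:R]natr1 mulrDl mul1r; lra.
set m := ((n.-1 - k) %/ k.+1)%N.
set s := ((n.-1 - k) %% k.+1)%N.
have Hdiv : (n.-1 - k = m * k.+1 + s)%N by rewrite /m /s -divn_eq.
have Hm : (1 <= m)%N.
  rewrite /m divn_gt0 //; lia.
have Hs : (s < k.+1)%N by rewrite /s ltn_mod.
have HCm := HC m ltac:(lia).
have HDm := HD (k + m * k.+1)%N s ltac:(nia) ltac:(lia).
have E3 : (k + m * k.+1 + s = n.-1)%N by lia.
rewrite E3 in HDm.
have Hn' : n = (m.+1 * k.+1 + s)%N by rewrite mulSn; lia.
rewrite Htop.
apply: (le_trans HDm).
rewrite [in X in _ <= X]Hn' natrD natrM.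
have : k.+1%:R * E (k + m * k.+1)%N <= k.+1%:R * (m.+1%:R * c).
  by rewrite ler_wpM2l.
lra.
Qed.
End Arith.
Section Main.
Variables (R : realType) (A : finType) (n k : nat) (Hn : (0 < n)%N) (Hk : (k < n)%N).
Variable X : {set {ffun 'I_n -> A}}.
Hypothesis Hrec : forall x y, x \in X -> y \in X -> forall v,
  (forall u, circ_adj n k v u -> x u = y u) -> x v = y v.

Local Notation G := (@Gf R _ _ X).
Local Notation I := itv.

Lemma Gf_addnbr (S : {set 'I_n}) v : (forall u, circ_adj n k v u -> u \in S) ->
  G (S :|: [set v]) = G S.
Proof.
move=> HS; apply: Gf_det => x y Hx Hy Hxy; rewrite agr1; apply/eqP.
apply: Hrec => // u Hu; apply/eqP; exact: (forall_inP Hxy u (HS u Hu)).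
Qed.

Lemma addo_inj a : injective (fun r => addo Hn r a).
Proof.
move=> r r' /(congr1 val) /= /eqP; rewrite eqn_modDr !modn_small // => /eqP H.
exact: val_inj.
Qed.

Lemma sumD (F1 F2 : 'I_n -> R) :
  \sum_(r : 'I_n) (F1 r + F2 r) = \sum_(r : 'I_n) F1 r + \sum_(r : 'I_n) F2 r.
Proof. by rewrite big_split. Qed.

Definition Erot L := \sum_(r : 'I_n) G (I r L).

Lemma Erot_shift a L : \sum_(r : 'I_n) G (I (addo Hn r a) L) = Erot L.
Proof. by rewrite /Erot [RHS](reindex_inj (addo_inj a)). Qed.

Lemma E_conc L : (1 <= L)%N -> (L.+1 <= n)%N -> Erot L.+1 + Erot L.-1 <= 2 * Erot L.
Proof.
move=> H1 H2.
have E1 : Erot L.+1 + Erot L.-1 = \sum_(r : 'I_n) (G (I r L.+1) + G (I (addo Hn r 1) L.-1)).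
  by rewrite -(Erot_shift 1 L.-1) /Erot [RHS]big_split.
have E2 : 2 * Erot L = \sum_(r : 'I_n) (G (I r L) + G (I (addo Hn r 1) L)).
  by rewrite mulr2n mulrDl mul1r -{2}(Erot_shift 1 L) /Erot [RHS]big_split.
rewrite E1 E2; apply: ler_sum => r _.
by rewrite (itv_U1 Hn r L H1 H2) -(itv_I1 Hn r L H1 H2) Gf_submod.
Qed.

Lemma E_hole b : (k <= b)%N -> (b + k.+1 <= n)%N -> Erot (b + k.+1)%N <= Erot k + Erot b.
Proof.
move=> H1 H2.
have E1 : Erot k + Erot b = \sum_(r : 'I_n) (G (I r k) + G (I (addo Hn r k.+1) b)).
  by rewrite -(Erot_shift k.+1 b) /Erot [RHS]big_split.
rewrite E1 /Erot; apply: ler_sum => r _.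
rewrite (itv_hole Hn k b r H2) Gf_addnbr; first exact: Gf_subadd.
by move=> u Hu; apply: hole_nbr.
Qed.

Lemma G_itv_le r L : (L <= n)%N -> G (I r L) <= L%:R * (NN R _ _ X * ln (#|A|)%:R).
Proof.
elim: L => [|L IH] HL; first by rewrite itv0 Gf0 mul0r.
rewrite (itv_S Hn r L HL).
apply: (le_trans (Gf_subadd _ _ _ _ _ _)).
rewrite -natr1 mulrDl mul1r lerD //; first by apply: IH; lia.
exact: Gf1.
Qed.

Lemma E_k : Erot k <= n%:R * (k%:R * (NN R _ _ X * ln (#|A|)%:R)).
Proof.
have H : Erot k <= \sum_(r : 'I_n) (k%:R * (NN R _ _ X * ln (#|A|)%:R)).
  apply: ler_sum => r _; apply: G_itv_le; lia.
by move: H; rewrite sumr_const card_ord [n%:R * _]mulr_natl.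
Qed.

Lemma E_top : Erot n = Erot n.-1.
Proof.
apply: eq_bigr => r _.
have Hn1 : (n.-1 < n)%N by lia.
have := itv_S Hn r n.-1 Hn1; rewrite prednK // => ->.
apply: Gf_addnbr => u Hu; exact: top_nbr Hu.
Qed.

Lemma E_n : Erot n = n%:R * (NN R _ _ X * ln (NN R _ _ X)).
Proof.
rewrite /Erot (eq_bigr (fun _ => NN R _ _ X * ln (NN R _ _ X))).
  by rewrite sumr_const card_ord mulr_natl.
by move=> r _; rewrite itvT // GfT.
Qed.


Lemma recov_bound : (k.*2.+2 <= n)%N -> (#|X| ^ k.+1 <= #|A| ^ (n * k))%N.
Proof.
move=> H2.
case: (eqVneq #|X| 0%N) => [->|XN0]; first by rewrite exp0n.
have [x0 Hx0] : exists x, x \in X.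
  have : (0 < #|X|)%N by rewrite lt0n.
  by rewrite card_gt0 => /set0Pn.
have NN0 : 0 < NN R _ _ X by rewrite /NN ltr0n lt0n.
have q0 : 0 < (#|A|)%:R :> R by rewrite ltr0n; apply/card_gt0P; exists (x0 (Ordinal Hn)).
have H := @seq_final R Erot n k _ H2 E_conc E_hole E_k E_top.
rewrite E_n in H.
set N := NN R _ _ X in H NN0.
set q := (#|A|)%:R : R in H q0.
have n0 : 0 < n%:R :> R by rewrite ltr0n.
have H3 : (n%:R * N) * (k.+1%:R * ln N) <= (n%:R * N) * ((n * k)%:R * ln q).
  rewrite natrM; move: H; set a := ln N; set b := ln q.
  have -> : k.+1%:R * (n%:R * (N * a)) = (n%:R * N) * (k.+1%:R * a) by ring.
  have -> : n%:R * (n%:R * (k%:R * (N * b))) = (n%:R * N) * (n%:R * k%:R * b) by ring.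
  done.
rewrite ler_pM2l ?mulr_gt0 // in H3.
have Xpos : 0 < (#|X| ^ k.+1)%:R :> R by rewrite ltr0n expn_gt0 lt0n XN0.
have Apos : 0 < (#|A| ^ (n * k))%:R :> R by rewrite natrX exprn_gt0.
rewrite -(ler_nat R) -(@ler_ln R _ _ (pos_in _ Xpos) (pos_in _ Apos)) !natrX.
rewrite !lnXn // -[_ *+ k.+1]mulr_natl -[_ *+ (n * k)]mulr_natl.
exact: H3.
Qed.

End Main.
Section Upper.
Local Open Scope nat_scope.
Variables (n k : nat) (Hn : 0 < n) (Hk : k < n).

Let B := {ffun 'I_k.+1 -> bool}.
Let Hc : #|alph k.+1| = #|B|.
Proof. by rewrite card_ffun card_bool card_ord /alph card_ord. Qed.
Let f (a : alph k.+1) : B := enum_val (cast_ord Hc (enum_rank a)).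
Let g (b : B) : alph k.+1 := enum_val (cast_ord (esym Hc) (enum_rank b)).
Let gK : cancel f g.
Proof. by move=> a; rewrite /f /g enum_valK cast_ordK enum_rankK. Qed.

Definition enc (x : 'I_n -> alph k.+1) : {ffun 'I_n -> bool} :=
  [ffun r => \big[addb/false]_(j < k.+1) f (x (addo Hn r j)) j].

Definition dec (v : 'I_n) (p : {ffun 'I_n -> bool}) (x : 'I_n -> alph k.+1) : alph k.+1 :=
  g [ffun j : 'I_k.+1 => p (addo Hn v (n - j)) (+)
      \big[addb/false]_(j' < k.+1 | j' != j) f (x (addo Hn (addo Hn v (n - j)) j')) j'].

Lemma addo_back v (j : 'I_k.+1) : addo Hn (addo Hn v (n - j)) j = v.
Proof.
apply: val_inj => /=; rewrite modnDml.
have -> : v + (n - j) + j = v + n by have := ltn_ord j; lia.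
by rewrite modnDr modn_small.
Qed.

Lemma addo_nbr v (j j' : 'I_k.+1) : j' != j ->
  circ_adj n k v (addo Hn (addo Hn v (n - j)) j').
Proof.
move=> Hne; apply/existsP.
have Hj := ltn_ord j; have Hj' := ltn_ord j'.
case: (ltnP j j') => Hlt.
  have Hg : j' - j < k.+1 by lia.
  exists (Ordinal Hg); apply/andP; split => /=; first lia.
  apply/orP; right; rewrite /= modnDml.
  apply/eqP; rewrite [in RHS]modn_mod.
  have -> : v + (n - j) + j' = (v + (j' - j)) + n by lia.
  by rewrite modnDr.
have Hg : j - j' < k.+1 by lia.
have Hlt' : j' < j by rewrite ltn_neqAle Hne Hlt.
exists (Ordinal Hg); apply/andP; split => /=; first lia.
apply/orP; left; rewrite /= modnDml.
rewrite -addnA modnDml.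
have -> : v + (n - j) + (j' + (j - j')) = v + n by lia.
by rewrite modnDr.
Qed.

Lemma upper : ic_achievable (circ_adj n k) k.+1 n.
Proof.
exists {ffun 'I_n -> bool}, enc; split; last first.
  by rewrite card_ffun card_bool card_ord up_expnK.
exists dec; split.
  move=> v p x y H; rewrite /dec; congr g; apply/ffunP => j; rewrite !ffunE.
  congr (_ (+) _); apply: eq_bigr => j' Hj'; rewrite H //; exact: addo_nbr.
move=> x v; rewrite /dec -[RHS]gK; congr g; apply/ffunP => j; rewrite !ffunE.
rewrite (bigD1 j) //= addo_back.
by rewrite -addbA addbb addbF.
Qed.

End Upper.
Lemma lower (R : realType) n k t ell : (k.*2.+2 <= n)%N ->
  ic_achievable (circ_adj n k) t ell -> (t * n <= k.+1 * ell)%N.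
Proof.
move=> H2 [P [E [[D [HD1 HD2]] Hell]]].
have Hn : (0 < n)%N by lia.
have Hk : (k < n)%N by lia.
pose Xp (p : P) := [set x : {ffun 'I_n -> alph t} | E x == p].
have Hrec : forall p x y, x \in Xp p -> y \in Xp p -> forall v,
    (forall u, circ_adj n k v u -> x u = y u) -> x v = y v.
  move=> p x y; rewrite !inE => /eqP Hx /eqP Hy v Hv.
  rewrite -(HD2 x v) -(HD2 y v) Hx Hy; exact: HD1.
have Hb : forall p, (#|Xp p| ^ k.+1 <= #|alph t| ^ (n * k))%N.
  move=> p; exact: (@recov_bound R _ n k Hn Hk (Xp p) (Hrec p) H2).
have Hsum : #|{ffun 'I_n -> alph t}| = (\sum_(p : P) #|Xp p|)%N.
  rewrite -sum1_card (partition_big (fun x : {ffun 'I_n -> alph t} => E x) xpredT) //.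
  apply: eq_bigr => p _; rewrite -sum1_card; apply: eq_bigl => x; by rewrite !inE.
have t0 : (0 < 2 ^ t)%N by rewrite expn_gt0.
pose x0 : {ffun 'I_n -> alph t} := [ffun _ => Ordinal t0].
case: (@arg_maxnP P (E x0) xpredT (fun p => #|Xp p|) isT) => pm _ Hmax.
have H1 : (#|alph t| ^ n <= #|P| * #|Xp pm|)%N.
  have Hcard : #|{ffun 'I_n -> alph t}| = (#|alph t| ^ n)%N by rewrite card_ffun [#|'I_n|]card_ord.
  rewrite -Hcard Hsum -sum_nat_const.
  by apply: leq_sum => p _; apply: Hmax.
have HA : #|alph t| = (2 ^ t)%N by rewrite card_ord.
rewrite HA in H1 Hb.
have HP : (#|P| <= 2 ^ ell)%N by rewrite -Hell; apply: up_logP.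
have H3 : ((2 ^ t) ^ n * (2 ^ t) ^ (n * k) <= #|P| ^ k.+1 * (2 ^ t) ^ (n * k))%N.
  have -> : ((2 ^ t) ^ n * (2 ^ t) ^ (n * k) = ((2 ^ t) ^ n) ^ k.+1)%N.
    by rewrite -expnD -(expnM (2 ^ t) n k.+1) mulnS.
  apply: (leq_trans (_ : _ <= (#|P| * #|Xp pm|) ^ k.+1)%N).
    by rewrite leq_exp2r.
  by rewrite expnMn leq_mul2l Hb orbT.
rewrite leq_pmul2r ?expn_gt0 ?t0 // in H3.
have H4 : (2 ^ (t * n) <= 2 ^ (ell * k.+1))%N.
  rewrite expnM (leq_trans H3) // expnM leq_exp2r //.
by rewrite leq_exp2l // [(ell * _)%N]mulnC in H4.
Qed.

Theorem theorem5p3 (R : realType) (n k : nat) :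
  (4 <= n)%N -> (2 * k < n - 1)%N ->
  broadcast_rate R (circ_adj n k) = (n%:R / (k.+1)%:R)%R.
Proof.
move=> H4 Hkn.
have H2 : (k.*2.+2 <= n)%N by lia.
have Hn : (0 < n)%N by lia.
have Hk : (k < n)%N by lia.
have Hlow : forall t, (t * n <= k.+1 * beta_t (circ_adj n k) t)%N.
  move=> t; rewrite /beta_t; case: ex_minnP => m Hm _.
  exact: (lower R _ _ _ _ H2 (asboolW Hm)).
have Hup : (beta_t (circ_adj n k) k.+1 <= n)%N.
  rewrite /beta_t; case: ex_minnP => m _ Hmin; apply: Hmin.
  by apply/asboolP; apply: upper.
have Hbeta : beta_t (circ_adj n k) k.+1 = n.
  apply/eqP; rewrite eqn_leq Hup /=.
  by have := Hlow k.+1; rewrite leq_pmul2l.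
rewrite /broadcast_rate; set S := (X in inf X).
have mS : S (n%:R / k.+1%:R)%R by rewrite /S; exists k.+1 => //; rewrite Hbeta.
have lb : lbound S (n%:R / k.+1%:R)%R.
  move=> y; rewrite /S => -[t Ht <-]; rewrite /= in Ht.
  have t0 : (0 < t%:R :> R)%R by rewrite ltr0n.
  have k0 : (0 < k.+1%:R :> R)%R by rewrite ltr0n.
  rewrite ler_pdivrMr // mulrAC ler_pdivlMr // -!natrM ler_nat mulnC.
  by rewrite [(_ * k.+1)%N]mulnC; apply: Hlow.
apply/eqP; rewrite eq_le; apply/andP; split.
  by apply: (ge_inf (ex_intro _ _ lb)).
by apply: lb_le_inf => //; exists (n%:R / k.+1%:R)%R.
Qed.
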